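(* Let $S$ be an optimal $n$-town placed in normalized position. If $i\ge0$ and $S$ contains the points $(i,c_i^+)$ and $(i,c_i^-)$, then every grid point of the rectangle $[-i,i]\times[c_i^-,c_i^+]$ belongs to $S$. Similarly, if $i\ge1$ and $S$ contains the points $(-i,c_{-i}^+)$ and $(-i,c_{-i}^-)$, then every grid point of the rectangle $[-i,i-1]\times[c_{-i}^-,c_{-i}^+]$ belongs to $S$.
   Context: An $n$-town is a set $S\subset\mathbb{Z}\times\mathbb{Z}$ of exactly $n$ distinct grid points; its cost is $c(S)=\frac12\sum_{s\in S}\sum_{t\in S}\|s-t\|_1$ (Manhattan distance), and it is optimal if its cost is minimum among all $n$-towns. Rows $R_i=\{(x,i)\in S\}$ and columns $C_i=\{(i,y)\in S\}$; the center of a nonempty row (column) is the midpoint between its extreme points. $S$ is in normalized position if the centers of all rows of odd cardinality lie on the $y$-axis, the centers of all rows of even cardinality lie on the line $x=-\frac12$, the centers of all columns of odd cardinality lie on the $x$-axis, and the centers of all columns of even cardinality lie on the line $y=-\frac12$. For a nonempty column $C_i$, $c_i^+$ and $c_i^-$ denote the $y$-coordinates of its topmost and bottommost points. *)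

(* Defs.v *)
From HB Require Import structures.
From mathcomp Require Import all_boot all_order all_algebra.
From mathcomp Require Import finmap.
Set Implicit Arguments. Unset Strict Implicit. Unset Printing Implicit Defensive.
Import Order.TTheory GRing.Theory Num.Theory.
Local Open Scope ring_scope.
Local Open Scope fset_scope.

Definition point := (int * int)%type.
Definition town := {fset point}.

Definition manh (s t : point) : int := `|s.1 - t.1| + `|s.2 - t.2|.

Definition cost (S : town) : rat :=
  (\sum_(s <- S) \sum_(t <- S) (manh s t)%:~R) / 2.

Definition is_town (n : nat) (S : town) : Prop := #|` S| = n.

Definition optimal (n : nat) (S : town) : Prop :=
  is_town n S /\ forall T : town, is_town n T -> cost S <= cost T.

Definition row (S : town) (j : int) : town := [fset p in S | p.2 == j].
Definition col (S : town) (i : int) : town := [fset p in S | p.1 == i].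

Definition center (a b : int) : rat := (a + b)%:~R / 2.

Definition row_extremes (S : town) (j a b : int) : Prop :=
  (a, j) \in S /\ (b, j) \in S /\ forall x, (x, j) \in S -> a <= x <= b.

Definition col_extremes (S : town) (i a b : int) : Prop :=
  (i, a) \in S /\ (i, b) \in S /\ forall y, (i, y) \in S -> a <= y <= b.

Definition normalized (S : town) : Prop :=
  (forall j a b, row_extremes S j a b ->
     center a b = (if odd #|` row S j| then 0 else - (1 / 2))) /\
  (forall i a b, col_extremes S i a b ->
     center a b = (if odd #|` col S i| then 0 else - (1 / 2))).

(* Main.v *)
Require Import Defs.
From HB Require Import structures.
From mathcomp Require Import all_boot all_order all_algebra.
From mathcomp Require Import finmap.
From mathcomp Require Import zify ring lra.
Import Order.TTheory GRing.Theory Num.Theory.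
Local Open Scope ring_scope.
Local Open Scope fset_scope.
Local Open Scope ring_scope.

Arguments manh : simpl never.

Definition sum2 (A : town) : int := \sum_(s <- A) \sum_(t <- A) manh s t.

Lemma manhC s t : manh s t = manh t s.
Proof. by rewrite /manh (distrC s.1) (distrC s.2). Qed.

Lemma manhxx s : manh s s = 0.
Proof. by rewrite /manh !subrr. Qed.

Lemma sum2U1 (r : point) (A : town) : r \notin A ->
  sum2 (r |` A) = (sum2 A + 2 * \sum_(t <- A) manh r t)%R.
Proof.
move=> rA; rewrite /sum2 big_fsetU1 //= big_fsetU1 //= manhxx add0r.
have -> : \sum_(i <- A) \sum_(t <- r |` A) manh i t =
   \sum_(i <- A) (manh r i + \sum_(t <- A) manh i t).
  by apply: eq_bigr => i _; rewrite big_fsetU1 // manhC.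
rewrite [X in _ + X = _]big_split /= mulr_natl mulr2n addrA [RHS]addrC. done.
Qed.

Lemma costE A : cost A = (sum2 A)%:~R / 2.
Proof.
rewrite /cost /sum2 rmorph_sum /=; congr (_ / _); apply: eq_bigr => s _.
by rewrite rmorph_sum.
Qed.

Lemma move_diff n S p q : optimal n S -> p \in S -> q \notin S ->
  0 <= \sum_(t <- S `\ p) (manh q t - manh p t).
Proof.
move=> [HS Hopt] pS qS.
have qS0 : q \notin S `\ p by rewrite in_fsetD1 negb_and qS orbT.
have pS0 : p \notin S `\ p by rewrite fsetD11.
have HT : is_town n (q |` (S `\ p)).
  by rewrite /is_town cardfsU1 qS0 add1n -HS (cardfsD1 p S) pS.
have := Hopt _ HT; rewrite !costE -{1}(fsetD1K pS) !sum2U1 //.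
rewrite ler_pM2r // ler_int => H.
rewrite big_split /= sumrN; move: H.
set a := \sum_(t <- S `\ p) manh q t; set b := \sum_(t <- S `\ p) manh p t.
lia.
Qed.

Lemma gap_contra n S (pi : point -> int) pa pb q :
  optimal n S -> pa \in S -> pb \in S -> q \notin S ->
  pi pa < pi q -> pi q < pi pb ->
  (forall t, manh q t - manh pa t = `|pi q - pi t| - `|pi pa - pi t|) ->
  (forall t, manh q t - manh pb t = `|pi q - pi t| - `|pi pb - pi t|) -> False.
Proof.
move=> Hopt paS pbS qS Haq Hqb Ea Eb.
pose g (t : point) : int := if pi q < pi t then 1 else -1.
pose h (t : point) : int := if pi t < pi q then 1 else -1.
have Hb : 0 <= \sum_(t <- S `\ pb) g t.
  have H1 := move_diff _ _ _ _ Hopt pbS qS.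
  have H2 : \sum_(t <- S `\ pb) (manh q t - manh pb t) <=
            (pi pb - pi q) * \sum_(t <- S `\ pb) g t.
    rewrite mulr_sumr; apply: ler_sum => t _; rewrite Eb /g.
    case: ifP => Ht; move: Ht Hqb; set u := pi q; set v := pi pb; set w := pi t;
    lia.
  have H3 : 0 <= (pi pb - pi q) * \sum_(t <- S `\ pb) g t := le_trans H1 H2.
  by rewrite pmulr_rge0 ?subr_gt0 in H3.
have Ha : 0 <= \sum_(t <- S `\ pa) h t.
  have H1 := move_diff _ _ _ _ Hopt paS qS.
  have H2 : \sum_(t <- S `\ pa) (manh q t - manh pa t) <=
            (pi q - pi pa) * \sum_(t <- S `\ pa) h t.
    rewrite mulr_sumr; apply: ler_sum => t _; rewrite Ea /h.
    case: ifP => Ht; move: Ht Haq; set u := pi q; set v := pi pa; set w := pi t;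
    lia.
  have H3 : 0 <= (pi q - pi pa) * \sum_(t <- S `\ pa) h t := le_trans H1 H2.
  by rewrite pmulr_rge0 ?subr_gt0 in H3.
have Sg : \sum_(t <- S) g t = 1 + \sum_(t <- S `\ pb) g t.
  by rewrite (big_fsetD1 _ pbS) /= {1}/g Hqb.
have Sh : \sum_(t <- S) h t = 1 + \sum_(t <- S `\ pa) h t.
  by rewrite (big_fsetD1 _ paS) /= {1}/h Haq.
have Sgh : \sum_(t <- S) (g t + h t) <= 0.
  apply: sumr_le0 => t _.
  rewrite /g /h; case: ifP; case: ifP => // H1 H2.
  by move: H1 H2; set u := pi q; set w := pi t; lia.
move: Sgh; rewrite big_split /= Sg Sh.
move: Ha Hb; set A := \sum_(t <- S `\ pa) h t; set B := \sum_(t <- S `\ pb) g t.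
lia.
Qed.

Arguments gap_contra {n S} pi {pa pb q}.

Lemma row_conv n S (a b x j : int) : optimal n S -> (a, j) \in S -> (b, j) \in S ->
  a <= x <= b -> (x, j) \in S.
Proof.
move=> Hopt aS bS /andP[Hax Hxb].
case: (boolP ((x, j) \in S)) => // xS; exfalso.
have [Eax|Nax] := eqVneq a x; first by move: xS; rewrite -Eax aS.
have [Exb|Nxb] := eqVneq x b; first by move: xS; rewrite Exb bS.
apply: (gap_contra fst Hopt aS bS xS) => /=.
- by rewrite lt_neqAle Nax Hax.
- by rewrite lt_neqAle Nxb Hxb.
- move=> t; rewrite /manh /=.
  set u := `|j - t.2|; set v := `|x - t.1|; set w := `|a - t.1|; lia.
- move=> t; rewrite /manh /=.
  set u := `|j - t.2|; set v := `|x - t.1|; set w := `|b - t.1|; lia.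
Qed.

Arguments row_conv {n S a b x j}.

Lemma col_conv n S (a b y i : int) : optimal n S -> (i, a) \in S -> (i, b) \in S ->
  a <= y <= b -> (i, y) \in S.
Proof.
move=> Hopt aS bS /andP[Hay Hyb].
case: (boolP ((i, y) \in S)) => // yS; exfalso.
have [Eay|Nay] := eqVneq a y; first by move: yS; rewrite -Eay aS.
have [Eyb|Nyb] := eqVneq y b; first by move: yS; rewrite Eyb bS.
apply: (gap_contra snd Hopt aS bS yS) => /=.
- by rewrite lt_neqAle Nay Hay.
- by rewrite lt_neqAle Nyb Hyb.
- move=> t; rewrite /manh /=.
  set u := `|i - t.1|; set v := `|y - t.2|; set w := `|a - t.2|; lia.
- move=> t; rewrite /manh /=.
  set u := `|i - t.1|; set v := `|y - t.2|; set w := `|b - t.2|; lia.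
Qed.

Arguments col_conv {n S a b y i}.

Lemma ex_minmax (s : seq int) (x0 : int) : x0 \in s ->
  exists a b, a \in s /\ b \in s /\ forall x, x \in s -> a <= x <= b.
Proof.
elim: s x0 => [//|c s IH] x0 _.
case: (boolP (s == [::])) => [/eqP -> | Hs].
  exists c, c; split; first by rewrite inE.
  split; first by rewrite inE.
  by move=> x; rewrite inE => /eqP ->; rewrite lexx.
case: s IH Hs => [//|d s] IH _.
have [a [b [aS [bS Hab]]]] := IH d (mem_head _ _).
exists (Order.min c a), (Order.max c b); split.
  by rewrite /Order.min; case: ifP => _; rewrite inE ?eqxx ?aS ?orbT.
split.
  by rewrite /Order.max; case: ifP => _; rewrite inE ?eqxx ?bS ?orbT.
move=> x; rewrite inE => /orP[/eqP -> | xs].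
  by rewrite ge_min le_max lexx.
have /andP[H1 H2] := Hab x xs.
by rewrite ge_min le_max H1 H2 !orbT.
Qed.

Lemma row_ext S (j x0 : int) : (x0, j) \in S -> exists a b, row_extremes S j a b.
Proof.
move=> x0S.
pose s := [seq p.1 | p <- enum_fset S & p.2 == j].
have memS x : (x \in s) = ((x, j) \in S).
  apply/mapP/idP => [[p] | H].
    rewrite mem_filter => /andP[/eqP <- pS] ->; by rewrite -surjective_pairing.
  by exists (x, j) => //; rewrite mem_filter eqxx.
have x0s : x0 \in s by rewrite memS.
have [a [b [aS [bS Hab]]]] := @ex_minmax s x0 x0s.
exists a, b; split; first by rewrite -memS.
split; first by rewrite -memS.
by move=> x; rewrite -memS; apply: Hab.
Qed.

Lemma center_cases (a b : int) :
  center a b = 0 \/ center a b = - (1 / 2) -> a + b = 0 \/ a + b = -1.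
Proof.
rewrite /center => [[H|H]]; [left|right]; apply: (@intr_inj rat).
  by move/(congr1 (fun r => r * 2)): H; rewrite divfK // mul0r.
move/(congr1 (fun r => r * 2)): H; rewrite divfK // mulNr div1r mulVf //.
Qed.

Theorem lemma6 (n : nat) (S : town) :
  optimal n S -> normalized S ->
  (forall (i cm cp : int), 0 <= i -> col_extremes S i cm cp ->
     forall x y : int, -i <= x <= i -> cm <= y <= cp -> (x, y) \in S) /\
  (forall (i cm cp : int), 1 <= i -> col_extremes S (- i) cm cp ->
     forall x y : int, -i <= x <= i - 1 -> cm <= y <= cp -> (x, y) \in S).
Proof.
move=> Hopt [Hrow _].
have key : forall (c y : int), (c, y) \in S -> exists a b,
    [/\ (a, y) \in S, (b, y) \in S, a <= c <= b & (a + b = 0 \/ a + b = -1)].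
  move=> c y cS; have [a [b Hr]] := row_ext _ _ _ cS.
  have Hc := Hrow y a b Hr; case: Hr => aS [bS Hab].
  exists a, b; split => //; first exact: Hab.
  by apply: center_cases; case: odd in Hc; [left|right].
split.
- move=> i cm cp Hi [cmS [cpS _]] x y Hx Hy.
  have iS := col_conv Hopt cmS cpS Hy.
  have [a [b [aS bS /andP[H1 H2] Hs]]] := key _ _ iS.
  apply: (row_conv Hopt aS bS); move: Hx => /andP[Hx1 Hx2]; apply/andP; split; lia.
- move=> i cm cp Hi [cmS [cpS _]] x y Hx Hy.
  have iS := col_conv Hopt cmS cpS Hy.
  have [a [b [aS bS /andP[H1 H2] Hs]]] := key _ _ iS.
  apply: (row_conv Hopt aS bS); move: Hx => /andP[Hx1 Hx2]; apply/andP; split; lia.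
Qed.
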